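(* Let $n,m\ge 3$ and let $G=P_n\square P_m$ be the grid graph. Let $(x_1,y_1),\dots,(x_k,y_k)$ be vertices and $(p,q)$ another vertex such that either $p<x_i$ for all $i\in\{1,\dots,k\}$ or $p>x_i$ for all $i\in\{1,\dots,k\}$, and either $q<y_i$ for all $i\in\{1,\dots,k\}$ or $q>y_i$ for all $i\in\{1,\dots,k\}$. Then there exist two neighbours of $(p,q)$, of the form $(p^*,q)$ and $(p,q^* )$, that are not resolved by any of the vertices $(p,q),(x_1,y_1),\dots,(x_k,y_k)$.
   Context: The grid graph $P_n\square P_m$ has vertex set $\{(i,j):0\le i\le n-1,\ 0\le j\le m-1\}$, with $(i,j)$ adjacent to $(k,l)$ iff $|i-k|+|j-l|=1$; distance $d((i,j),(k,l))=|i-k|+|j-l|$. A vertex $w$ resolves $x,y$ if $d(w,x)\ne d(w,y)$. *)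

(* Defs.v *)
From mathcomp Require Import all_boot.
Set Implicit Arguments. Unset Strict Implicit. Unset Printing Implicit Defensive.

Definition gvert (n m : nat) : Type := ('I_n * 'I_m)%type.

Definition absdiff (a b : nat) : nat := (a - b) + (b - a).

Definition gdist (n m : nat) (u v : gvert n m) : nat :=
  absdiff (val u.1) (val v.1) + absdiff (val u.2) (val v.2).

Definition gadj (n m : nat) (u v : gvert n m) : Prop := gdist u v = 1.

Definition resolves (n m : nat) (w x y : gvert n m) : Prop := gdist w x <> gdist w y.

(* Main.v *)
Require Import Defs.
From mathcomp Require Import all_boot.
From mathcomp Require Import zify.

Lemma step (n k : nat) (f : 'I_k -> nat) (p : nat) (hpn : p < n) (hn : 3 <= n)
  (hf : forall i, f i < n)
  (hp : (forall i, p < f i) \/ (forall i, f i < p)) :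
  exists a : 'I_n, absdiff p a = 1 /\ forall i, (absdiff (f i) a).+1 = absdiff (f i) p.
Proof.
rewrite /absdiff.
case: hp => H.
- case: (ltnP p.+1 n) => h.
  + exists (Ordinal h) => /=; split; first lia.
    move=> i; have := H i; lia.
  + have h' : p.-1 < n by lia.
    exists (Ordinal h') => /=; split; first lia.
    move=> i; have := H i; have := hf i; lia.
- case: (posnP p) => h.
  + have h' : p.+1 < n by lia.
    exists (Ordinal h') => /=; split; first lia.
    move=> i; have := H i; lia.
  + have h' : p.-1 < n by lia.
    exists (Ordinal h') => /=; split; first lia.
    move=> i; have := H i; lia.
Qed.

Theorem lemma2 (n m k : nat) (hn : 3 <= n) (hm : 3 <= m)
  (X : 'I_k -> gvert n m) (v : gvert n m)
  (hp : (forall i : 'I_k, val v.1 < val (X i).1) \/ (forall i : 'I_k, val (X i).1 < val v.1))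
  (hq : (forall i : 'I_k, val v.2 < val (X i).2) \/ (forall i : 'I_k, val (X i).2 < val v.2)) :
  exists (ps : 'I_n) (qs : 'I_m),
    gadj v (ps, v.2) /\ gadj v (v.1, qs) /\
    ~ resolves v (ps, v.2) (v.1, qs) /\
    (forall i : 'I_k, ~ resolves (X i) (ps, v.2) (v.1, qs)).
Proof.
have [a [Ha1 Ha2]] := @step n k (fun i => nat_of_ord (X i).1) (nat_of_ord v.1) (ltn_ord _) hn
  (fun i => ltn_ord _) hp.
have [b [Hb1 Hb2]] := @step m k (fun i => nat_of_ord (X i).2) (nat_of_ord v.2) (ltn_ord _) hm
  (fun i => ltn_ord _) hq.
exists a, b.
rewrite /gadj /resolves /gdist /=.
have E : forall x : nat, absdiff x x = 0 by move=> x; rewrite /absdiff subnn.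
rewrite !E.
split; first lia. split; first lia. split; first lia.
move=> i; have := Ha2 i; have := Hb2 i; lia.
Qed.
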